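(* Let $(M,d)$ be a complete geodesic space and $f:M\to\mathbb R$ a function. (1) If $f$ is geodesically $\beta$-expconcave for some $\beta>0$, then $f$ is geodesically convex. (2) If $f$ is geodesically $\alpha$-convex and $L$-Lipschitz for some $\alpha,L>0$, then $f$ is geodesically $\beta$-expconcave for every $0<\beta\le \alpha/L^2$.
   Context: A geodesic in a metric space $(M,d)$ is a path $\gamma:[0,1]\to M$ with $d(\gamma(s),\gamma(t))=|t-s|\,d(\gamma(0),\gamma(1))$ for all $s,t\in[0,1]$. $(M,d)$ is a geodesic space if any two points $x,y\in M$ are connected by a geodesic ($\gamma(0)=x,\gamma(1)=y$). For $\alpha\in\mathbb R$, $f:M\to\mathbb R$ is geodesically $\alpha$-convex if for every geodesic $\gamma:[0,1]\to M$ the function $t\in[0,1]\mapsto f(\gamma(t))-\frac{\alpha}{2}d^2(\gamma(0),\gamma(t))$ is convex; $f$ is geodesically convex if it is geodesically $0$-convex, and geodesically concave if $-f$ is geodesically convex. For $\beta>0$, $f$ is geodesically $\beta$-expconcave if $\exp(-\beta f)$ is geodesically concave. *)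

(* Defs.v *)
From Stdlib Require Import Reals.
Open Scope R_scope.

Record is_metric {M : Type} (d : M -> M -> R) : Prop := {
  d_nonneg : forall x y, 0 <= d x y;
  d_sep : forall x y, d x y = 0 <-> x = y;
  d_sym : forall x y, d x y = d y x;
  d_tri : forall x y z, d x z <= d x y + d y z }.

Definition complete_metric {M : Type} (d : M -> M -> R) : Prop :=
  forall u : nat -> M,
    (forall eps, 0 < eps -> exists N : nat, forall m n : nat,
        (N <= m)%nat -> (N <= n)%nat -> d (u m) (u n) < eps) ->
    exists x : M, forall eps, 0 < eps -> exists N : nat, forall n : nat,
        (N <= n)%nat -> d (u n) x < eps.

(* A geodesic: a path [0,1] -> M (represented by R -> M, only values on
   [0,1] matter) with d(g s, g t) = |t - s| d(g 0, g 1). *)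
Definition geodesic {M : Type} (d : M -> M -> R) (g : R -> M) : Prop :=
  forall s t, 0 <= s <= 1 -> 0 <= t <= 1 ->
    d (g s) (g t) = Rabs (t - s) * d (g 0) (g 1).

Definition geodesic_space {M : Type} (d : M -> M -> R) : Prop :=
  forall x y : M, exists g : R -> M, geodesic d g /\ g 0 = x /\ g 1 = y.

Definition convex_on_01 (h : R -> R) : Prop :=
  forall s t l, 0 <= s <= 1 -> 0 <= t <= 1 -> 0 <= l <= 1 ->
    h ((1 - l) * s + l * t) <= (1 - l) * h s + l * h t.

Definition geod_alpha_convex {M : Type} (d : M -> M -> R) (alpha : R)
    (f : M -> R) : Prop :=
  forall g : R -> M, geodesic d g ->
    convex_on_01 (fun t => f (g t) - alpha / 2 * (d (g 0) (g t)) ^ 2).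

Definition geod_convex {M : Type} (d : M -> M -> R) (f : M -> R) : Prop :=
  geod_alpha_convex d 0 f.

Definition geod_concave {M : Type} (d : M -> M -> R) (f : M -> R) : Prop :=
  geod_convex d (fun x => - f x).

Definition geod_expconcave {M : Type} (d : M -> M -> R) (beta : R)
    (f : M -> R) : Prop :=
  geod_concave d (fun x => exp (- beta * f x)).

Definition lipschitz {M : Type} (d : M -> M -> R) (L : R) (f : M -> R) : Prop :=
  forall x y, Rabs (f x - f y) <= L * d x y.

(* Main.v *)
Require Import Defs.
From Stdlib Require Import Reals.
From Stdlib Require Import Lra.
From Coquelicot Require Import Coquelicot.
Open Scope R_scope.

Lemma exp_le_mono x y : x <= y -> exp x <= exp y.
Proof. intros [H|H]; [left; apply exp_increasing; auto | subst; lra]. Qed.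

Lemma exp_le_inv' x y : exp x <= exp y -> x <= y.
Proof. intros H. destruct (Rle_dec x y) as [h|h]; auto.
  assert (exp y < exp x) by (apply exp_increasing; lra). lra. Qed.

Definition Pf y := (exp y - exp (-y)) - y * (exp y + exp (-y)).
Definition Gf y := (exp y + exp (-y)) * exp (-(y*y)/2).

Lemma Pf_nonpos y : 0 < y -> Pf y <= 0.
Proof.
  intros Hy.
  destruct (MVT_cor2 Pf (fun c => - c * (exp c - exp (-c))) 0 y Hy) as [c [Hc1 Hc2]].
  { intros c _. apply is_derive_Reals. unfold Pf. auto_derive; auto. ring. }
  assert (Pf 0 = 0) by (unfold Pf; rewrite Ropp_0; ring).
  assert (exp (-c) <= exp c) by (apply exp_le_mono; lra).
  assert (0 <= c * (exp c - exp (-c))) by (apply Rmult_le_pos; lra).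
  nra.
Qed.

Lemma Gf_le y : 0 < y -> Gf y <= 2.
Proof.
  intros Hy.
  destruct (MVT_cor2 Gf (fun c => Pf c * exp (-(c*c)/2)) 0 y Hy) as [c [Hc1 Hc2]].
  { intros c _. apply is_derive_Reals. unfold Gf, Pf. auto_derive; auto. set (E := exp _). unfold Rdiv in *. field. }
  assert (Gf 0 = 2) by (unfold Gf; rewrite Ropp_0, Rmult_0_l, Ropp_0, Rdiv_0_l, exp_0; ring).
  assert (Pf c <= 0) by (apply Pf_nonpos; lra).
  assert (0 < exp (-(c*c)/2)) by apply exp_pos.
  assert (Pf c * exp (-(c*c)/2) <= 0) by nra.
  nra.
Qed.

Lemma cosh_le y : exp y + exp (-y) <= 2 * exp (y*y/2).
Proof.
  assert (K : forall z, 0 < z -> exp z + exp (-z) <= 2 * exp (z*z/2)).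
  { intros z Hz. pose proof (Gf_le z Hz) as H. unfold Gf in H.
    assert (E: exp (-(z*z)/2) * exp (z*z/2) = 1).
    { rewrite <- exp_plus. replace (-(z*z)/2 + z*z/2) with 0 by field. apply exp_0. }
    assert (0 < exp (z*z/2)) by apply exp_pos.
    apply Rmult_le_compat_r with (r := exp (z*z/2)) in H; [|lra].
    rewrite Rmult_assoc, E in H. lra. }
  destruct (Rtotal_order y 0) as [h|[h|h]].
  - pose proof (K (-y) ltac:(lra)). rewrite Ropp_involutive in H.
    replace (-y * -y) with (y*y) in H by ring. lra.
  - subst. rewrite Ropp_0, Rmult_0_l, Rdiv_0_l, exp_0. lra.
  - auto.
Qed.

Lemma exp_convex x y l : 0 <= l <= 1 ->
  exp ((1-l)*x + l*y) <= (1-l)*exp x + l*exp y.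
Proof.
  intros Hl. set (m := (1-l)*x + l*y).
  assert (Ex : exp x = exp m * exp (x - m)) by (rewrite <- exp_plus; f_equal; ring).
  assert (Ey : exp y = exp m * exp (y - m)) by (rewrite <- exp_plus; f_equal; ring).
  pose proof (exp_ineq1_le (x - m)). pose proof (exp_ineq1_le (y - m)).
  pose proof (exp_pos m).
  assert (exp m * (1 + (x-m)) <= exp m * exp (x-m)) by (apply Rmult_le_compat_l; lra).
  assert (exp m * (1 + (y-m)) <= exp m * exp (y-m)) by (apply Rmult_le_compat_l; lra).
  rewrite Ex, Ey.
  assert ((1-l) * (exp m * (1 + (x-m))) + l * (exp m * (1 + (y-m))) = exp m)
    by (unfold m; ring).
  assert ((1-l) * (exp m * (1 + (x-m))) <= (1-l) * (exp m * exp (x-m)))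
    by (apply Rmult_le_compat_l; lra).
  assert (l * (exp m * (1 + (y-m))) <= l * (exp m * exp (y-m)))
    by (apply Rmult_le_compat_l; lra).
  lra.
Qed.

Lemma key_ineq a b x : x <= (a+b)/2 - (b-a)^2/8 -> exp (-a) + exp (-b) <= 2 * exp (-x).
Proof.
  intros H. set (y := (b-a)/2). pose proof (cosh_le y) as C.
  assert (Ea : exp (-a) = exp (-(a+b)/2) * exp y) by (rewrite <- exp_plus; f_equal; unfold y; field).
  assert (Eb : exp (-b) = exp (-(a+b)/2) * exp (-y)) by (rewrite <- exp_plus; f_equal; unfold y; field).
  assert (Ec : exp (-(a+b)/2) * exp (y*y/2) = exp (-(a+b)/2 + y*y/2)) by (rewrite exp_plus; auto).
  assert (exp (-(a+b)/2 + y*y/2) <= exp (-x)) by (apply exp_le_mono; unfold y; lra).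
  pose proof (exp_pos (-(a+b)/2)).
  assert (exp (-(a+b)/2) * (exp y + exp (-y)) <= exp (-(a+b)/2) * (2 * exp (y*y/2)))
    by (apply Rmult_le_compat_l; lra).
  rewrite Ea, Eb. nra.
Qed.

Lemma lip_cont (F : R -> R) K : 0 <= K ->
  (forall x y, Rabs (F x - F y) <= K * Rabs (x - y)) -> forall x, continuity_pt F x.
Proof.
  intros HK HF x. unfold continuity_pt, continue_in, limit1_in, limit_in.
  intros eps He. exists (eps / (K+1)). split.
  - apply Rdiv_lt_0_compat; lra.
  - intros z [_ Hz]. simpl in *. unfold R_dist in *.
    pose proof (HF z x). pose proof (Rabs_pos (z - x)).
    assert (K * Rabs (z - x) <= K * (eps/(K+1))) by (apply Rmult_le_compat_l; lra).
    assert (K * (eps/(K+1)) < eps).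
    { apply Rmult_lt_reg_r with (K+1); [lra|]. field_simplify; [|lra]. nra. }
    lra.
Qed.

Lemma conc_lt (F : R -> R) : (forall x, continuity_pt F x) ->
  (forall s t, 0<=s<=1 -> 0<=t<=1 -> F s + F t <= 2 * F ((s+t)/2)) ->
  forall s t l, 0<=s<=1 -> 0<=t<=1 -> 0<=l<=1 -> s < t ->
  (1-l)*F s + l*F t <= F ((1-l)*s + l*t).
Proof.
  intros Hc Hm s t l Hs Ht Hl Hst.
  set (c := (F t - F s) / (t - s)).
  set (k := fun x => F x - (F s + c * (x - s))).
  assert (Hk : forall x, continuity_pt k x).
  { intros x. unfold k. apply continuity_pt_minus; auto.
    apply (lip_cont _ (Rabs c)); [apply Rabs_pos|].
    intros u v. replace (F s + c * (u - s) - (F s + c * (v - s))) with (c * (u - v)) by ring.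
    rewrite Rabs_mult. lra. }
  destruct (continuity_ab_min k s t (Rlt_le _ _ Hst) (fun x _ => Hk x)) as [x0 [Hmin Hx0]].
  assert (ks : k s = 0) by (unfold k; ring).
  assert (kt : k t = 0) by (unfold k, c; field; lra).
  assert (Hmid : forall u, s <= x0 - u -> x0 + u <= t -> 0 <= u ->
     k (x0 - u) + k (x0 + u) <= 2 * k x0).
  { intros u H1 H2 H3. unfold k. pose proof (Hm (x0-u) (x0+u) ltac:(lra) ltac:(lra)).
    replace ((x0 - u + (x0 + u)) / 2) with x0 in H by field. lra. }
  assert (k x0 >= 0).
  { destruct (Rle_dec (x0 - s) (t - x0)).
    - pose proof (Hmid (x0 - s) ltac:(lra) ltac:(lra) ltac:(lra)).
      replace (x0 - (x0 - s)) with s in H by ring.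
      pose proof (Hmin (x0 + (x0 - s)) ltac:(lra)). lra.
    - pose proof (Hmid (t - x0) ltac:(lra) ltac:(lra) ltac:(lra)).
      replace (x0 + (t - x0)) with t in H by ring.
      pose proof (Hmin (x0 - (t - x0)) ltac:(lra)). lra. }
  set (m := (1-l)*s + l*t).
  assert (s <= m <= t) by (unfold m; nra).
  pose proof (Hmin m H0).
  unfold k in H1, H.
  assert (c * (m - s) = l * (F t - F s)) by (unfold c, m; field; lra).
  lra.
Qed.

Lemma conc (F : R -> R) : (forall x, continuity_pt F x) ->
  (forall s t, 0<=s<=1 -> 0<=t<=1 -> F s + F t <= 2 * F ((s+t)/2)) ->
  forall s t l, 0<=s<=1 -> 0<=t<=1 -> 0<=l<=1 ->
  (1-l)*F s + l*F t <= F ((1-l)*s + l*t).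
Proof.
  intros Hc Hm s t l Hs Ht Hl.
  destruct (Rtotal_order s t) as [h|[h|h]].
  - apply conc_lt; auto.
  - subst. replace ((1-l)*t + l*t) with t by ring. lra.
  - pose proof (conc_lt F Hc Hm t s (1-l) Ht Hs ltac:(lra) h).
    replace ((1 - (1 - l)) * t + (1 - l) * s) with ((1-l)*s + l*t) in H by ring. lra.
Qed.

Definition clamp x := Rmax 0 (Rmin 1 x).

Lemma clamp_id x : 0 <= x <= 1 -> clamp x = x.
Proof. intros. unfold clamp, Rmax, Rmin. repeat destruct Rle_dec; lra. Qed.

Lemma clamp_in x : 0 <= clamp x <= 1.
Proof. unfold clamp, Rmax, Rmin. repeat destruct Rle_dec; lra. Qed.

Lemma clamp_lip x y : Rabs (clamp x - clamp y) <= Rabs (x - y).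
Proof.
  unfold clamp, Rmax, Rmin. repeat destruct Rle_dec;
  unfold Rabs; repeat destruct Rcase_abs; lra.
Qed.

Theorem lemma1 (M : Type) (d : M -> M -> R)
  (Hmetric : is_metric d) (Hcomplete : complete_metric d)
  (Hgeod : geodesic_space d) (f : M -> R) :
  (forall beta, 0 < beta -> geod_expconcave d beta f -> geod_convex d f) /\
  (forall alpha L, 0 < alpha -> 0 < L ->
     geod_alpha_convex d alpha f -> lipschitz d L f ->
     forall beta, 0 < beta -> beta <= alpha / L ^ 2 -> geod_expconcave d beta f).
Proof.
  assert (Z : forall X, 0/2*X = 0) by (intros; field).
  split.
  - intros beta Hb Hexp. unfold geod_expconcave, geod_concave, geod_convex,
      geod_alpha_convex, convex_on_01 in *.
    intros g Hg s t l Hs Ht Hl. pose proof (Hexp g Hg s t l Hs Ht Hl) as H.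
    cbv beta in *. rewrite !Z in *.
    pose proof (exp_convex (-beta * f (g s)) (-beta * f (g t)) l Hl).
    assert (exp ((1 - l) * (- beta * f (g s)) + l * (- beta * f (g t))) <=
            exp (- beta * f (g ((1 - l) * s + l * t)))) by lra.
    apply exp_le_inv' in H1.
    assert (beta * f (g ((1 - l) * s + l * t)) <= beta * ((1-l) * f (g s) + l * f (g t))) by lra.
    apply Rmult_le_reg_l in H2; lra.
  - intros alpha L Ha HL Hconv Hlip beta Hb Hbl.
    unfold geod_expconcave, geod_concave, geod_convex, geod_alpha_convex, convex_on_01.
    intros g Hg s t l Hs Ht Hl. cbv beta. rewrite !Z.
    set (D := d (g 0) (g 1)).
    assert (HD : 0 <= D) by (apply (d_nonneg d Hmetric)).
    assert (Hd : forall t, 0 <= t <= 1 -> d (g 0) (g t) = t * D).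
    { intros u Hu. unfold D. rewrite (Hg 0 u); [|lra|lra]. rewrite Rabs_pos_eq; lra. }
    assert (HbL : beta * L^2 <= alpha).
    { assert (0 < L^2) by (apply pow_lt; lra).
      apply (Rmult_le_compat_r (L^2)) in Hbl; [|lra].
      replace (alpha / L ^ 2 * L ^ 2) with alpha in Hbl by (field; lra). lra. }
    set (F := fun x => exp (- beta * f (g (clamp x)))).
    assert (FE : forall x, 0 <= x <= 1 -> F x = exp (- beta * f (g x))).
    { intros x Hx. unfold F. rewrite clamp_id; auto. }
    assert (Fc : forall x, continuity_pt F x).
    { intros x. unfold F.
      apply (continuity_pt_comp (fun x => - beta * f (g (clamp x))) exp x).
      - apply (lip_cont _ (beta * L * D)).
        + apply Rmult_le_pos; [|auto]. apply Rmult_le_pos; lra.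
        + intros u v.
          replace (- beta * f (g (clamp u)) - - beta * f (g (clamp v)))
            with (- beta * (f (g (clamp u)) - f (g (clamp v)))) by ring.
          rewrite Rabs_mult, Rabs_Ropp, (Rabs_pos_eq beta); [|lra].
          pose proof (Hlip (g (clamp u)) (g (clamp v))).
          rewrite (Hg (clamp u) (clamp v) (clamp_in u) (clamp_in v)) in H.
          rewrite (Rabs_minus_sym u v).
          assert (L * (Rabs (clamp v - clamp u) * D) <= L * (Rabs (v - u) * D)).
          { apply Rmult_le_compat_l; [lra|]. apply Rmult_le_compat_r; auto.
            exact (clamp_lip v u). }
          assert (beta * Rabs (f (g (clamp u)) - f (g (clamp v))) <=
                  beta * (L * (Rabs (v - u) * D))) by (apply Rmult_le_compat_l; [lra|]; fold D in H; lra).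
          lra.
      - apply derivable_continuous_pt, derivable_pt_exp. }
    assert (Fm : forall s t, 0<=s<=1 -> 0<=t<=1 -> F s + F t <= 2 * F ((s+t)/2)).
    { intros a b Ha' Hb'. rewrite !FE; try lra.
      pose proof (Hconv g Hg a b (/2) Ha' Hb' ltac:(lra)) as H. cbv beta in H.
      replace ((1 - / 2) * a + / 2 * b) with ((a+b)/2) in H by field.
      rewrite !Hd in H; try lra.
      set (pa := f (g a)) in *. set (pb := f (g b)) in *. set (pm := f (g ((a+b)/2))) in *.
      set (Q := D^2 * (b-a)^2).
      assert (HQ : 0 <= Q) by (unfold Q; apply Rmult_le_pos; apply pow2_ge_0).
      assert (H1 : pm <= (pa+pb)/2 - alpha * Q / 8).
      { assert (alpha / 2 * ((a + b) / 2 * D) ^ 2 - /2 * (alpha / 2 * (a * D) ^ 2)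
               - /2 * (alpha / 2 * (b * D) ^ 2) = - (alpha * Q / 8)) by (unfold Q; field).
        lra. }
      pose proof (Hlip (g b) (g a)) as HL2. fold pa pb in HL2.
      rewrite (Hg b a) in HL2; try lra. fold D in HL2.
      assert (H2 : (pb - pa)^2 <= L^2 * Q).
      { rewrite <- pow2_abs. 
        assert (0 <= Rabs (pb - pa)) by apply Rabs_pos.
        assert ((L * (Rabs (a - b) * D))^2 = L^2 * Q).
        { unfold Q. rewrite <- (pow2_abs (b - a)), Rabs_minus_sym. ring. }
        rewrite <- H2. apply pow_incr. lra. }
      assert (H3 : (beta*pb - beta*pa)^2 <= beta * alpha * Q).
      { replace ((beta*pb - beta*pa)^2) with (beta^2 * (pb-pa)^2) by ring.
        assert (beta^2 * (pb-pa)^2 <= beta^2 * (L^2*Q))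
          by (apply Rmult_le_compat_l; [apply pow2_ge_0|lra]).
        assert (beta * (beta * L^2) * Q <= beta * alpha * Q).
        { apply Rmult_le_compat_r; auto. apply Rmult_le_compat_l; lra. }
        nra. }
      assert (H4 : beta * pm <= beta * ((pa+pb)/2 - alpha * Q / 8))
        by (apply Rmult_le_compat_l; lra).
      pose proof (key_ineq (beta*pa) (beta*pb) (beta*pm)).
      replace (- beta * pa) with (- (beta*pa)) by ring.
      replace (- beta * pb) with (- (beta*pb)) by ring.
      replace (- beta * pm) with (- (beta*pm)) by ring.
      apply H0. lra. }
    pose proof (conc F Fc Fm s t l Hs Ht Hl).
    rewrite !FE in H; try lra.
    + assert (0 <= (1-l)*s + l*t <= 1) by nra. auto.
Qed.
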